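(* Let $\mathcal A$ be a unital $C^*$-algebra and $\mathcal F\subseteq\mathcal A$ an algebra of finite type elements. An element $a\in\mathcal A$ is of Fredholm type if and only if $a$ is invertible modulo $\mathcal F$, i.e. there exist $b_1,b_2\in\mathcal A$ with $ab_1-1\in\mathcal F$ and $b_2a-1\in\mathcal F$.
   Context: Let $\mathcal A$ be a unital $C^*$-algebra. A subalgebra $\mathcal F\subseteq\mathcal A$ is an algebra of finite type elements if: (i) $\mathcal F$ is a self-adjoint two-sided ideal of $\mathcal A$; (ii) $\mathcal F$ has an approximate unit consisting of projections, i.e. a net $(p_\alpha)$ of projections in $\mathcal F$ with $\|f-p_\alpha f\|\to0$ and $\|f-fp_\alpha\|\to0$ for every $f\in\mathcal F$; (iii) for any projections $p,q\in\mathcal F$ there is $v\in\mathcal A$ with $vv^*=q$ and $v^*vp=0$. For $a\in\mathcal A$ and projections $p,q\in\mathcal A$, $a$ is invertible up to $(p,q)$ if there is $b\in\mathcal A$ with $b=(1-p)b(1-q)$, $(1-q)a(1-p)b=1-q$ and $b(1-q)a(1-p)=1-p$. $a$ is of Fredholm type if it is invertible up to $(p,q)$ for some projections $p,q\in\mathcal F$. *)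

(* Defs.v *)
From HB Require Import structures.
From mathcomp Require Import all_boot all_order all_algebra.
From mathcomp Require Import reals.
From mathcomp.real_closed Require Import complex.
Set Implicit Arguments. Unset Strict Implicit. Unset Printing Implicit Defensive.
Import Order.TTheory GRing.Theory Num.Theory.
Local Open Scope ring_scope.
Local Open Scope complex_scope.

Section CStar.
Variables (R : realType) (A : algType R[i]) (nrm : A -> R) (star : A -> A).

Record is_cstar_algebra : Prop := {
  nrm_ge0 : forall a, 0 <= nrm a;
  nrm_eq0 : forall a, nrm a = 0 -> a = 0;
  nrm_triangle : forall a b, nrm (a + b) <= nrm a + nrm b;
  nrm_scale : forall (c : R[i]) a, (nrm (c *: a))%:C = `|c| * (nrm a)%:C;
  nrm_submul : forall a b, nrm (a * b) <= nrm a * nrm b;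
  nrm_complete : forall u : nat -> A,
    (forall eps : R, 0 < eps -> exists N, forall m n, (N <= m)%N -> (N <= n)%N ->
        nrm (u m - u n) < eps) ->
    exists l : A, forall eps : R, 0 < eps -> exists N, forall n, (N <= n)%N ->
        nrm (u n - l) < eps;
  star_add : forall a b, star (a + b) = star a + star b;
  star_scale : forall (c : R[i]) a, star (c *: a) = (c^*)%C *: star a;
  star_mul : forall a b, star (a * b) = star b * star a;
  star_invol : forall a, star (star a) = a;
  cstar_identity : forall a, nrm (star a * a) = nrm a ^+ 2
}.

Definition is_projection (p : A) : Prop := p * p = p /\ star p = p.

Definition is_selfadjoint_ideal (F : A -> Prop) : Prop :=
  [/\ F 0,
      (forall f g, F f -> F g -> F (f + g)),
      (forall (c : R[i]) f, F f -> F (c *: f)),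
      (forall a f, F f -> F (a * f) /\ F (f * a)) &
      (forall f, F f -> F (star f))].

Definition has_projection_approx_unit (F : A -> Prop) : Prop :=
  exists (I : Type) (le : I -> I -> Prop) (p : I -> A),
    [/\ (forall i, le i i),
        (forall i j k, le i j -> le j k -> le i k),
        (forall i j, exists k, le i k /\ le j k),
        (forall i, is_projection (p i) /\ F (p i)) &
        (forall f, F f -> forall eps : R, 0 < eps -> exists i0, forall i, le i0 i ->
            nrm (f - p i * f) < eps /\ nrm (f - f * p i) < eps)].

Definition is_finite_type_algebra (F : A -> Prop) : Prop :=
  [/\ is_selfadjoint_ideal F,
      has_projection_approx_unit F &
      (forall p q, is_projection p -> F p -> is_projection q -> F q ->
         exists v : A, v * star v = q /\ star v * v * p = 0)].

Definition invertible_upto (a p q : A) : Prop :=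
  exists b : A, [/\ b = (1 - p) * b * (1 - q),
                    (1 - q) * a * (1 - p) * b = 1 - q &
                    b * ((1 - q) * a * (1 - p)) = 1 - p].

Definition fredholm_type (F : A -> Prop) (a : A) : Prop :=
  exists p q : A, [/\ is_projection p, F p, is_projection q, F q &
                      invertible_upto a p q].

Definition invertible_modulo (F : A -> Prop) (a : A) : Prop :=
  exists b1 b2 : A, F (a * b1 - 1) /\ F (b2 * a - 1).

End CStar.

(* Main.v *)
Require Import Defs.
From HB Require Import structures.
From mathcomp Require Import all_boot all_order all_algebra.
From mathcomp Require Import reals.
From mathcomp.real_closed Require Import complex.
From mathcomp Require Import lra.
Import Order.TTheory GRing.Theory Num.Theory.
Local Open Scope ring_scope.
Local Open Scope complex_scope.

Section Basic.
Variables (R : realType) (A : algType R[i]) (nrm : A -> R) (star : A -> A).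
Hypothesis HC : is_cstar_algebra nrm star.
Local Notation iC := (@Complex R 0 1).

Lemma nrmZ (c : R[i]) (s : R) y : `|c| = s%:C -> nrm (c *: y) = s * nrm y.
Proof. by move=> hc; apply: complexI; rewrite (nrm_scale HC) hc rmorphM. Qed.

Lemma nrm0 : nrm 0 = 0.
Proof. by rewrite -(scale0r (0 : A)) (@nrmZ 0 0) ?mul0r // normr0. Qed.

Lemma nrmN y : nrm (- y) = nrm y.
Proof. by rewrite -scaleN1r (@nrmZ (-1) 1) ?mul1r // normrN1. Qed.

Lemma nrmB y z : nrm (y - z) = nrm (z - y).
Proof. by rewrite -nrmN opprB. Qed.

Lemma nrm_small y : (forall eps : R, 0 < eps -> nrm y < eps) -> y = 0.
Proof.
move=> h; apply: (nrm_eq0 HC); have := nrm_ge0 HC y.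
rewrite le_eqVlt => /orP[/eqP -> //|/h]; by rewrite ltxx.
Qed.

Lemma star1 : star 1 = 1.
Proof.
have h : forall y, y = y * star 1.
  move=> y; rewrite -{1}(star_invol HC y) -{1}(mul1r (star y)).
  by rewrite (star_mul HC) (star_invol HC).
by rewrite [RHS](h 1) mul1r.
Qed.

Lemma nrm1 : nrm 1 <= 1.
Proof.
have := cstar_identity HC 1; rewrite star1 mulr1 => h.
have := nrm_ge0 HC 1; nra.
Qed.

Lemma nrmX y n : nrm (y ^+ n) <= nrm y ^+ n.
Proof.
elim: n => [|n IH]; first by rewrite !expr0 nrm1.
rewrite !exprS; apply: le_trans (nrm_submul HC _ _) _.
by apply: ler_wpM2l; [exact: (nrm_ge0 HC)|].
Qed.

Lemma nrm_star y : nrm (star y) = nrm y.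
Proof.
have h : forall z, nrm z <= nrm (star z).
  move=> z; have := cstar_identity HC z; have := nrm_submul HC (star z) z.
  have := nrm_ge0 HC z; have := nrm_ge0 HC (star z); nra.
apply/eqP; rewrite eq_le h andbT.
by have := h (star y); rewrite (star_invol HC).
Qed.

Lemma geo_small (r eps : R) : 0 <= r < 1 -> 0 < eps ->
  exists N, forall n, (N <= n)%N -> r ^+ n < eps.
Proof.
move=> /andP[r0 r1] e0.
have [->|rn0] := eqVneq r 0.
  by exists 1%N => -[|n] // _; rewrite expr0n.
have rp : 0 < r by rewrite lt_def rn0.
set d := r^-1 - 1.
have dp : 0 < d by rewrite subr_gt0 invf_gt1.
have rd : r * (1 + d) = 1 by rewrite /d addrC subrK mulfV.
have bern : forall n, 1 + n%:R * d <= (1 + d) ^+ n.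
  elim=> [|n IH]; first by rewrite mul0r addr0 expr0.
  rewrite exprS -natr1 mulrDl mul1r.
  have : 1 <= (1 + d) ^+ n by rewrite exprn_ege1 // lerDl ltW.
  nra.
set y := (eps * d)^-1.
have yed : y * (eps * d) = 1 by rewrite mulVf // mulf_neq0 // gt_eqF.
exists (Num.truncn y).+1 => n hn.
have hy := archimedean.Num.Theory.truncnS_gt y.
have hN : ((Num.truncn y).+1%:R <= n%:R :> R) by rewrite ler_nat.
have hrn : r ^+ n * (1 + d) ^+ n = 1 by rewrite -exprMn rd expr1n.
have hb := bern n; have hr0 : 0 < r ^+ n by rewrite exprn_gt0.
have hed : 0 < eps * d by rewrite mulr_gt0.
move: hb hr0 hed hrn hN hy yed; set m := n%:R; set M := _.+1%:R; set rn := r ^+ n.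
set dn := (1 + d) ^+ n => hb hr0 hed hrn hN hy yed.
have h1 : rn * (1 + m * d) <= 1 by nra.
have h2 : 1 < m * (eps * d) by nra.
have hm : 0 < m * d by nra.
nra.
Qed.

Fixpoint geo (x : A) (n : nat) : A := if n is k.+1 then geo x k + x ^+ k else 0.

Lemma geo_mulL x n : (1 - x) * geo x n = 1 - x ^+ n.
Proof.
elim: n => [|n IH] /=; first by rewrite mulr0 expr0 subrr.
by rewrite mulrDr IH mulrBl mul1r -exprS addrA subrK.
Qed.

Lemma geo_mulR x n : geo x n * (1 - x) = 1 - x ^+ n.
Proof.
elim: n => [|n IH] /=; first by rewrite mul0r expr0 subrr.
by rewrite mulrDl IH mulrBr mulr1 -exprSr addrA subrK.
Qed.

Lemma geo_bound x m k : nrm x < 1 ->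
  nrm (geo x (m + k) - geo x m) * (1 - nrm x) <= nrm x ^+ m - nrm x ^+ (m + k).
Proof.
move=> hx; elim: k => [|k IH]; first by rewrite addn0 !subrr nrm0 mul0r.
rewrite addnS /= addrAC.
have h1 := nrm_triangle HC (geo x (m + k) - geo x m) (x ^+ (m + k)).
have h2 := nrmX x (m + k).
rewrite exprS.
move: h1 h2 IH; set a := nrm (_ + _); set b := nrm (_ - _); set c := nrm (_ ^+ _).
set r := nrm x; set p := r ^+ m; set q := r ^+ (m + k) => h1 h2 IH.
have : 0 <= 1 - r by rewrite subr_ge0 ltW.
nra.
Qed.

Lemma neumann x : nrm x < 1 -> exists y, (1 - x) * y = 1 /\ y * (1 - x) = 1.
Proof.
move=> hx; set r := nrm x.
have r0 : 0 <= r := nrm_ge0 HC x.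
have r1 : 0 < 1 - r by rewrite subr_gt0.
have hr : 0 <= r < 1 by rewrite r0.
have cau : forall eps : R, 0 < eps -> exists N, forall m n, (N <= m)%N -> (N <= n)%N ->
    nrm (geo x m - geo x n) < eps.
  move=> eps e0.
  have [N hN] := geo_small _ _ hr (mulr_gt0 e0 r1).
  have key : forall m n, (N <= m)%N -> (m <= n)%N -> nrm (geo x n - geo x m) < eps.
    move=> m n hm hmn; rewrite -(subnKC hmn).
    have h := geo_bound x m (n - m) hx.
    have h2 := hN m hm.
    have h3 : 0 <= r ^+ (m + (n - m)) by rewrite exprn_ge0.
    move: h h2 h3; set a := nrm _; set p := r ^+ m; set q := r ^+ _ => h h2 h3.
    have : 0 <= a := nrm_ge0 HC _.
    move=> ha; rewrite -/r in h; nra.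
  exists N => m n hm hn; case: (leqP m n) => hmn.
    by rewrite nrmB; apply: key.
  by apply: key => //; apply: ltnW.
have [l hl] := nrm_complete HC cau.
have close : forall eps : R, 0 < eps -> exists n, nrm (geo x n - l) < eps /\ nrm (x ^+ n) < eps.
  move=> eps e0; have [N1 h1] := hl eps e0.
  have [N2 h2] := geo_small _ _ hr e0.
  exists (maxn N1 N2); split; first by apply: h1; rewrite leq_maxl.
  apply: le_lt_trans (nrmX _ _) _; by apply: h2; rewrite leq_maxr.
exists l; split; apply: subr0_eq; apply: nrm_small => eps e0.
- set C := nrm (1 - x).
  have C0 : 0 <= C := nrm_ge0 HC _.
  have C1 : 0 < C + 1 by rewrite ltr_wpDl.
  set d := eps / (C + 1).
  have d0 : 0 < d by rewrite divr_gt0.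
  have hd : d * (C + 1) = eps by rewrite divfK // gt_eqF.
  have [n [hn1 hn2]] := close d d0.
  have -> : (1 - x) * l - 1 = (1 - x) * (l - geo x n) - x ^+ n.
    by rewrite mulrBr geo_mulL opprB addrA addrAC addrK.
  apply: le_lt_trans (nrm_triangle HC _ _) _; rewrite nrmN.
  apply: le_lt_trans (lerD (nrm_submul HC _ _) (lexx _)) _.
  rewrite (nrmB l); have ha := nrm_ge0 HC (geo x n - l).
  move: hn1 hn2 ha; set a := nrm (geo x n - l); set b := nrm (x ^+ n) => hn1 hn2 ha.
  rewrite -/C; nra.
- set C := nrm (1 - x).
  have C0 : 0 <= C := nrm_ge0 HC _.
  have C1 : 0 < C + 1 by rewrite ltr_wpDl.
  set d := eps / (C + 1).
  have d0 : 0 < d by rewrite divr_gt0.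
  have hd : d * (C + 1) = eps by rewrite divfK // gt_eqF.
  have [n [hn1 hn2]] := close d d0.
  have -> : l * (1 - x) - 1 = (l - geo x n) * (1 - x) - x ^+ n.
    by rewrite mulrBl geo_mulR opprB addrA addrAC addrK.
  apply: le_lt_trans (nrm_triangle HC _ _) _; rewrite nrmN.
  apply: le_lt_trans (lerD (nrm_submul HC _ _) (lexx _)) _.
  rewrite (nrmB l); have ha := nrm_ge0 HC (geo x n - l).
  move: hn1 hn2 ha; set a := nrm (geo x n - l); set b := nrm (x ^+ n) => hn1 hn2 ha.
  rewrite -/C; nra.
Qed.

Lemma nrmZ0 (s : R) y : 0 <= s -> nrm (s%:C *: y) = s * nrm y.
Proof. by move=> s0; apply: nrmZ; rewrite ger0_norm // ler0c. Qed.

Lemma inv_scale (mu : R[i]) (z y : A) : mu != 0 -> z * y = 1 -> y * z = 1 ->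
  exists w, (mu *: z) * w = 1 /\ w * (mu *: z) = 1.
Proof.
move=> mu0 h1 h2; exists (mu^-1 *: y).
by rewrite -scalerAl -scalerAr scalerA h1 mulfV // scale1r
  -scalerAl -scalerAr scalerA h2 mulVf // scale1r.
Qed.

Lemma arens h : star h = h ->
  exists y, (iC *: (1 : A) - h) * y = 1 /\ y * (iC *: 1 - h) = 1.
Proof.
move=> hs; set t := nrm h ^+ 2.
have t0 : 0 <= t by rewrite exprn_ge0 // (nrm_ge0 HC).
set c : R[i] := Complex 0 t.
set g := h + c *: (1 : A).
have hg : star g * g = h * h + (t ^+ 2)%:C *: 1.
  rewrite /g (star_add HC) (star_scale HC) hs star1.
  have -> : (c^*)%C = - c by rewrite /c /=; congr Complex; rewrite oppr0.
  rewrite mulrDl !mulrDr -!scalerAl -!scalerAr !mul1r !mulr1 scaleNr.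
  rewrite scalerA addrA addrK.
  have -> : - c * c = (t ^+ 2)%:C.
    by rewrite /c; simpc; rewrite expr2.
  by [].
have hng : nrm g ^+ 2 <= t + t ^+ 2.
  rewrite -(cstar_identity HC) hg.
  apply: le_trans (nrm_triangle HC _ _) _.
  rewrite nrmZ0 ?exprn_ge0 ?(nrm_ge0 HC) //.
  have := nrm_submul HC h h; have := nrm1; rewrite /t expr2.
  have := nrm_ge0 HC h; nra.
have ng0 := nrm_ge0 HC g.
have hlt : nrm g < 1 + t.
  move: hng ng0; clearbody t; set ng := nrm g => hng ng0; nra.
set mu : R[i] := Complex 0 (1 + t).
have mu0 : mu != 0.
  apply/eqP; rewrite /mu => -[] /eqP; rewrite gt_eqF //; exact: ltr_wpDr.
have nmu : `|mu^-1| = ((1 + t)^-1)%:C.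
  rewrite normfV normc_def /mu /= expr0n /= add0r sqrtr_sqr ger0_norm; last first.
    by rewrite addr_ge0.
  by rewrite fmorphV.
have hx : nrm (mu^-1 *: g) < 1.
  rewrite (nrmZ _ _ _ nmu) mulrC ltr_pdivrMr ?mul1r //.
  by rewrite ltr_wpDr.
have [y [hy1 hy2]] := neumann _ hx.
have [w [hw1 hw2]] := inv_scale _ _ _ mu0 hy1 hy2.
have e : mu *: (1 - mu^-1 *: g) = iC *: 1 - h.
  rewrite scalerBr scalerA mulfV // scale1r /g opprD addrA addrAC -scalerBl.
  congr (_ *: _ - _); rewrite /mu /c; congr Complex; rewrite ?subr0 //.
  by rewrite addrK.
by exists w; rewrite -e.
Qed.

Lemma star_opp y : star (- y) = - star y.
Proof.
rewrite -scaleN1r (star_scale HC).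
have -> : ((-1 : R[i])^*)%C = -1 by rewrite /= oppr0.
by rewrite scaleN1r.
Qed.

Lemma star_sub y z : star (y - z) = star y - star z.
Proof. by rewrite (star_add HC) star_opp. Qed.

Lemma inv_unique (z w v : A) : z * w = 1 -> v * z = 1 -> v = w.
Proof. by move=> h1 h2; rewrite -[v]mulr1 -h1 mulrA h2 mul1r. Qed.

Lemma mul1B (x y : A) : (1 - x) * (1 - y) = 1 - x - y + x * y.
Proof.
by rewrite mulrBl mul1r mulrBr mulr1 opprB addrA addrAC; congr (_ + _); rewrite addrAC.
Qed.

Lemma idem_proj e : e * e = e ->
  exists w, is_projection star (e * star e * w) /\
    e * (e * star e * w) = e * star e * w /\ (e * star e * w) * e = e.
Proof.
move=> ee.
have es : star e * star e = star e by rewrite -(star_mul HC) ee.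
set d := e - star e.
have sd : star d = - d by rewrite star_sub (star_invol HC) opprB.
set h := iC *: d.
have hs : star h = h.
  rewrite /h (star_scale HC) sd scalerN -scaleNr; congr (_ *: _).
  by simpc.
have [y1 [hy1 hy1']] := arens _ hs.
have hs' : star (- h) = - h by rewrite star_opp hs.
have [y2 [hy2 hy2']] := arens _ hs'.
rewrite opprK in hy2 hy2'.
set z := 1 - d * d.
have hh : h * h = - (d * d).
  rewrite /h -scalerAl -scalerAr scalerA.
  have -> : (iC * iC : R[i]) = -1 by rewrite -expr2 sqr_i.
  by rewrite scaleN1r.
have zf : z = - ((iC *: 1 - h) * (iC *: 1 + h)).
  clearbody h.
  rewrite mulrDr !mulrBl -!scalerAl -!scalerAr !mul1r !mulr1 scalerA.
  have -> : (iC * iC : R[i]) = -1 by rewrite -expr2 sqr_i.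
  by rewrite hh opprK addrA subrK opprD scaleN1r opprK.
set w := - (y2 * y1).
have zw : z * w = 1.
  by rewrite zf /w mulrN mulNr opprK mulrA -(mulrA _ _ y2) hy2 mulr1 hy1.
have wz : w * z = 1.
  by rewrite zf /w mulrN mulNr opprK mulrA -(mulrA _ y1) hy1' mulr1 hy2'.
have ed : e * d = e - e * star e by rewrite /d mulrBr ee.
have de : d * e = e - star e * e by rewrite /d mulrBl ee.
have esd : star e * d = star e * e - star e by rewrite /d mulrBr es.
have ds : d * star e = e * star e - star e by rewrite /d mulrBl es.
have edd : e * (d * d) = e - e * star e * e.
  rewrite mulrA ed mulrBl ed -(mulrA e (star e) d) esd mulrBr mulrA.
  by rewrite opprB addrA subrK.
have dde : d * d * e = e - e * star e * e.
  rewrite -mulrA de mulrBr de mulrA ds mulrBl.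
  by rewrite opprB addrA subrK.
have ez : e * z = e * star e * e by rewrite /z mulrBr mulr1 edd opprB addrC subrK.
have ze : z * e = e * star e * e by rewrite /z mulrBl mul1r dde opprB addrC subrK.
have ew : e * w = w * e.
  by rewrite -[e * w]mul1r -wz -mulrA (mulrA z) ze -ez -(mulrA e z w) zw mulr1.
have sz : star z = z.
  by rewrite /z star_sub star1 (star_mul HC) sd mulrNN.
have sw : star w = w.
  apply: (inv_unique _ _ _ zw); by rewrite -sz -(star_mul HC) zw star1.
have esw : star e * w = w * star e.
  by have := congr1 star ew; rewrite !(star_mul HC) sw => ->.
have zes : z * star e = star e * z.
  by have := congr1 star (etrans ez (esym ze)); rewrite !(star_mul HC) sz.
have wee : w * (e * star e) = e * star e * w.
  by rewrite mulrA -ew -mulrA esw mulrA.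
exists w; split; [split|split].
- rewrite !mulrA -(mulrA (e * star e) w e) -ew mulrA.
  rewrite -(mulrA (e * star e * e) w (star e)) -esw mulrA -ez.
  rewrite -(mulrA e z (star e)) zes mulrA -(mulrA (e * star e) z w) zw mulr1.
  by [].
- by rewrite !(star_mul HC) (star_invol HC) sw wee.
- by rewrite !mulrA ee.
- by rewrite -mulrA -ew mulrA -ez -mulrA zw mulr1.
Qed.

Lemma nrm_proj p : p * p = p -> star p = p -> nrm p <= 1.
Proof.
move=> pp ps; have := cstar_identity HC p; rewrite ps pp.
have := nrm_ge0 HC p; nra.
Qed.

End Basic.

Section Ideal.
Variables (R : realType) (A : algType R[i]) (star : A -> A) (F : A -> Prop).
Hypothesis HF : is_selfadjoint_ideal star F.

Definition eqF (x y : A) := F (x - y).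

Lemma F_opp f : F f -> F (- f).
Proof. by case: HF => _ _ hs _ _ hf; rewrite -scaleN1r; apply: hs. Qed.

Lemma eqF_refl x : eqF x x.
Proof. by case: HF => h0 _ _ _ _; rewrite /eqF subrr. Qed.

Lemma eqF_sym x y : eqF x y -> eqF y x.
Proof. by move=> h; rewrite /eqF -opprB; apply: F_opp. Qed.

Lemma eqF_trans x y z : eqF x y -> eqF y z -> eqF x z.
Proof.
case: HF => _ hadd _ _ _ h1 h2; rewrite /eqF.
by have := hadd _ _ h1 h2; rewrite addrA subrK.
Qed.

Lemma eqF_add x x' y y' : eqF x x' -> eqF y y' -> eqF (x + y) (x' + y').
Proof.
case: HF => _ hadd _ _ _ h1 h2; rewrite /eqF.
by have := hadd _ _ h1 h2; rewrite opprD addrACA.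
Qed.

Lemma eqF_mul x x' y y' : eqF x x' -> eqF y y' -> eqF (x * y) (x' * y').
Proof.
case: HF => _ hadd _ hmul _ h1 h2; rewrite /eqF.
have := hadd _ _ (proj2 (hmul y _ h1)) (proj1 (hmul x' _ h2)).
by rewrite mulrBl mulrBr addrA subrK.
Qed.

Lemma eqF0 f : F f -> eqF f 0.
Proof. by rewrite /eqF subr0. Qed.

Lemma eqF_1B q : F q -> eqF (1 - q) 1.
Proof. by move=> h; rewrite /eqF addrAC subrr add0r; apply: F_opp. Qed.

End Ideal.

Arguments eqF {R A} F x y.
Arguments eqF0 {R A F} {f}.
Arguments star_sub {R A nrm star} HC.
Arguments star1 {R A nrm star} HC.
Arguments nrm_proj {R A nrm star} HC.
Arguments nrmN {R A nrm star} HC.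
Arguments neumann {R A nrm star} HC.
Arguments idem_proj {R A nrm star} HC.
Arguments eqF_refl {R A star F} HF x.
Arguments eqF_sym {R A star F} HF {x y}.
Arguments eqF_trans {R A star F} HF {x y z}.
Arguments eqF_add {R A star F} HF {x x' y y'}.
Arguments eqF_mul {R A star F} HF {x x' y y'}.
Arguments eqF_1B {R A star F} HF {q}.
Arguments F_opp {R A star F} HF {f}.

Local Close Scope complex_scope.

Theorem mainTheorem5 (R : realType) (A : algType R[i]) (nrm : A -> R)
    (star : A -> A) (F : A -> Prop) :
  is_cstar_algebra nrm star ->
  is_finite_type_algebra nrm star F ->
  forall a : A, fredholm_type star F a <-> invertible_modulo F a.
Proof.
move=> HC [HFid HFau _] a.
have Fmul := (let: And5 _ _ _ h _ := HFid in h).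
split.
- case=> p [q [[pp ps] Fp [qq qs] Fq [b [hb1 hb2 hb3]]]].
  have ha : eqF F ((1 - q) * a * (1 - p)) a.
    have := eqF_mul HFid (eqF_mul HFid (eqF_1B HFid Fq) (eqF_refl HFid a))
      (eqF_1B HFid Fp).
    by rewrite mul1r mulr1.
  exists b, b; split.
  + apply: (eqF_trans HFid (eqF_mul HFid (eqF_sym HFid ha) (eqF_refl HFid b))).
    by rewrite hb2; exact: (eqF_1B HFid Fq).
  + apply: (eqF_trans HFid (eqF_mul HFid (eqF_refl HFid b) (eqF_sym HFid ha))).
    by rewrite hb3; exact: (eqF_1B HFid Fp).
- case=> b1 [b2 [h1 h2]].
  have Fadd := (let: And5 _ h _ _ _ := HFid in h).
  have h1' : eqF F (a * b1) 1 := h1.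
  have h2' : eqF F (b2 * a) 1 := h2.
  have hb : eqF F b2 b1.
    have e1 : eqF F (b2 * 1) (b2 * (a * b1)).
      exact: (eqF_mul HFid (eqF_refl HFid b2) (eqF_sym HFid h1')).
    rewrite mulr1 mulrA in e1; apply: (eqF_trans HFid e1).
    by have := eqF_mul HFid h2' (eqF_refl HFid b1); rewrite mul1r.
  have hba : eqF F (b1 * a) 1.
    exact: (eqF_trans HFid (eqF_mul HFid (eqF_sym HFid hb) (eqF_refl HFid a)) h2').
  case: HFau => I [le [pr [hrefl _ _ hpr happ]]].
  set f := a * b1 - 1.
  have [i0 hi0] := happ f h1 1 ltr01.
  have [hq1 _] := hi0 i0 (hrefl i0).
  have [[qq qs] Fq] := hpr i0.
  move: hq1 qq qs Fq; set q := pr i0 => hq1 qq qs Fq.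
  set u := 1 - q.
  have uu : u * u = u by rewrite /u mul1B qq subrK.
  have us : star u = u by rewrite /u (star_sub HC) (star1 HC) qs.
  have nu : nrm u <= 1 := nrm_proj HC _ uu us.
  set x := u * f * u.
  have Fx : F x.
    by have [_ h] := Fmul u (u * f) (proj1 (Fmul u f h1)).
  have hx : nrm (- x) < 1.
    rewrite (nrmN HC); apply: le_lt_trans (nrm_submul HC _ _) _.
    have hu : u * f = f - q * f by rewrite /u mulrBl mul1r.
    rewrite hu; have := nrm_ge0 HC (f - q * f); nra.
  have [w0 [hw1 hw2]] := neumann HC _ hx; rewrite opprK in hw1 hw2.
  have xu : x * u = x by rewrite /x -mulrA uu.
  have ux : u * x = x by rewrite /x !mulrA uu.
  set z := u * w0 * u.
  have zu : z * u = z by rewrite /z -mulrA uu.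
  have uz : u * z = z by rewrite /z !mulrA uu.
  have e1 : u + x = u * (1 + x) by rewrite mulrDr mulr1 ux.
  have e2 : u + x = (1 + x) * u by rewrite mulrDl mul1r xu.
  have hz1 : (u + x) * z = u.
    rewrite /z !mulrA [(u + x) * u]mulrDl uu xu e1 -(mulrA u) hw1 mulr1 uu.
    by [].
  have hz2 : z * (u + x) = u.
    rewrite /z -!mulrA [u * (u + x)]mulrDr uu ux e2 (mulrA w0) hw2 mul1r uu.
    by [].
  set T := u * a.
  set Rr := b1 * z.
  have ab : a * b1 = 1 + f by rewrite /f addrC subrK.
  have xz : x * z = u * f * z by rewrite /x -mulrA uz.
  have TR : T * Rr = u.
    by rewrite /T /Rr mulrA -(mulrA u a b1) ab mulrDr mulr1 mulrDl -xz -mulrDl hz1.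
  have Ru : Rr * u = Rr by rewrite /Rr -mulrA zu.
  have uT : u * T = T by rewrite /T mulrA uu.
  set K := 1 - Rr * T.
  have hu1 : eqF F u 1 := eqF_1B HFid Fq.
  have hz : eqF F z 1.
    have e3 : eqF F (z * 1) (z * (u + x)).
      refine (eqF_mul HFid (eqF_refl HFid z) _).
      rewrite -(addr0 (1 : A)).
      exact: (eqF_add HFid (eqF_sym HFid hu1) (eqF_sym HFid (eqF0 Fx))).
    rewrite mulr1 hz2 in e3; exact: (eqF_trans HFid e3 hu1).
  have FK : F K.
    have e4 : eqF F (Rr * T) (b1 * 1 * (1 * a)).
      exact: (eqF_mul HFid (eqF_mul HFid (eqF_refl HFid b1) hz)
                (eqF_mul HFid hu1 (eqF_refl HFid a))).
    rewrite mulr1 mul1r in e4.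
    exact: (eqF_sym HFid (eqF_trans HFid e4 hba)).
  have KK : K * K = K.
    rewrite /K mul1B (mulrA (Rr * T) Rr T) -(mulrA Rr T Rr) TR Ru.
    by rewrite subrK.
  have TK : T * K = 0 by rewrite /K mulrBr mulr1 mulrA TR uT subrr.
  have [w [[kk ks] [Kk kK]]] := idem_proj HC _ KK.
  move: kk ks Kk kK; set k := K * star K * w => kk ks Kk kK.
  have Fk : F k.
    have [_ h] := Fmul (star K) K FK.
    by have [_ h'] := Fmul w _ h.
  have Tk : T * k = 0 by rewrite -Kk mulrA TK mul0r.
  have Tk1 : T * (1 - k) = T by rewrite mulrBr mulr1 Tk subr0.
  have kc : (1 - k) * (1 - k) = 1 - k by rewrite mul1B kk subrK.
  have RT : Rr * T = 1 - K by rewrite /K opprB addrC subrK.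
  exists k, q; split => //.
  exists ((1 - k) * Rr); split; rewrite -/u.
  + by rewrite mulrA kc -mulrA Ru.
  + by rewrite -/T Tk1 (mulrA T (1 - k) Rr) Tk1 TR.
  + rewrite -/T Tk1 -mulrA RT mul1B kK.
    by rewrite subrK.
Qed.
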